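(* For every integer $n\ge 3$, let $t(n)$ denote the largest positive integer $k$ such that there exists a positive tribonacci sequence of length $k$ terminating at $n$. Then there are at most $561001$ positive tribonacci sequences of length $t(n)$ terminating at $n$.
   Context: A tribonacci sequence of length $k$ is a sequence of integers $\langle a_i\rangle_{i=1}^k$ such that $a_i=a_{i-1}+a_{i-2}+a_{i-3}$ for all $4\le i\le k$. It terminates at $a_k$. It is positive if $a_1,a_2,a_3>0$ (for length less than 3, all terms are required to be positive). For $n\ge 3$ the set of such $k$ is non-empty and bounded, so $t(n)$ is well defined. *)

(* Defs.v *)
From mathcomp Require Import all_boot all_order all_algebra.
Set Implicit Arguments. Unset Strict Implicit. Unset Printing Implicit Defensive.
Import Order.TTheory GRing.Theory Num.Theory.
Local Open Scope ring_scope.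

(* A finite sequence of integers a_1, ..., a_k is represented by the list
   s = [:: a_1; ...; a_k] (0-indexed: nth 0 s i = a_(i+1)); its length is size s. *)

Definition is_tribonacci (s : seq int) : Prop :=
  forall i : nat, (3 <= i)%N -> (i < size s)%N ->
    nth 0 s i = nth 0 s (i - 1)%N + nth 0 s (i - 2)%N + nth 0 s (i - 3)%N.

Definition trib_positive (s : seq int) : Prop :=
  forall i : nat, (i < minn 3 (size s))%N -> 0 < nth 0 s i.

Definition terminates_at (n : int) (s : seq int) : Prop :=
  (0 < size s)%N /\ last 0 s = n.

Definition pos_trib_seq (n : int) (k : nat) (s : seq int) : Prop :=
  size s = k /\ is_tribonacci s /\ trib_positive s /\ terminates_at n s.

Definition is_t (n : int) (k : nat) : Prop :=
  (0 < k)%N /\ (exists s, pos_trib_seq n k s) /\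
  (forall k' s, (0 < k')%N -> pos_trib_seq n k' s -> (k' <= k)%N).

(* Main.v *)
Require Import Defs.
From mathcomp Require Import all_boot all_order all_algebra.
From mathcomp Require Import ring lra zify realalg.
Import Order.TTheory GRing.Theory Num.Theory.
Local Open Scope ring_scope.
Set Implicit Arguments. Unset Strict Implicit.


Definition sG (R : rcfType) (r a b c : R) := (c - r*b)^+2 + (r-1)*(b - r*a)*(c - r*b) + (r^+2-r-1)*(b-r*a)^+2.
Definition sU (R : rcfType) (r a b c : R) := c + (r-1)*b + (r^+2-r-1)*a.

Definition rho_ok (R : rcfType) (r : R) := 103/56 <= r /\ r <= 252/137.

Lemma q_bounds (R : rcfType) (r : R) : rho_ok r -> 54/100 <= r^+2 - r - 1 /\ r^+2 - r - 1 <= 545/1000.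
Proof.
move=> [H1 H2].
have e1 : 0 <= (r - 103/56) * (r + 47/56) by apply: mulr_ge0; lra.
have e2 : 0 <= (252/137 - r) * (r + 115/137) by apply: mulr_ge0; lra.
split; nra.
Qed.

Lemma quad_bound (R : rcfType) (p q S0 S1 U : R) : 0 <= p -> p <= 84/100 -> 0 <= q -> q <= 545/1000 ->
  S0^+2 <= (35/10)^+2 * U^+2 -> S1^+2 <= (22/10)^+2 * U^+2 ->
  S1^+2 + p * S0 * S1 + q * S0^+2 <= 20 * U^+2.
Proof.
move=> hp1 hp2 hq1 hq2 h0 h1'.
have e1 : 0 <= p * ((63/100 * S0 - S1)^+2) by apply: mulr_ge0 => //; apply: sqr_ge0.
have e2 : 0 <= (84/100 - p) * S0^+2 by apply: mulr_ge0; [lra| apply: sqr_ge0].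
have e3 : 0 <= (84/100 - p) * S1^+2 by apply: mulr_ge0; [lra| apply: sqr_ge0].
have e4 : 0 <= (545/1000 - q) * S0^+2 by apply: mulr_ge0; [lra| apply: sqr_ge0].
nra.
Qed.

Lemma sq_le (R : rcfType) (S U al : R) : 0 <= al -> -(al * U) <= S -> S <= al * U -> S^+2 <= al^+2 * U^+2.
Proof. move=> ha hl hu.
have e : 0 <= (al * U - S) * (al * U + S) by apply: mulr_ge0; lra.
nra. Qed.

Lemma G_le_U (R : rcfType) (r a b c : R) : rho_ok r -> 0 < a -> 0 < b -> 0 < c -> sG r a b c <= 20 * (sU r a b c)^+2.
Proof.
move=> hr ha hb hc.
have [hq1 hq2] := q_bounds hr.
case: hr => H1 H2.
rewrite /sG /sU.
set q := r^+2 - r - 1 in hq1 hq2 *.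
clearbody q.
have e1 : 0 <= r * a by apply: mulr_ge0; lra.
have e2 : 0 <= (r - 103/56) * b by apply: mulr_ge0; lra.
have e3 : 0 <= q * a by apply: mulr_ge0; lra.
have e4 : 0 <= (q - 54/100) * a by apply: mulr_ge0; lra.
have e5 : 0 <= (184/100 - r) * a by apply: mulr_ge0; lra.
have e6 : 0 <= r * b by apply: mulr_ge0; lra.
apply: quad_bound; [lra|lra|lra|lra| |].
- apply: sq_le; lra.
- apply: sq_le; lra.
Qed.

Lemma G_S1 (R : rcfType) (r a b c : R) : rho_ok r -> (c - r*b)^+2 <= 2 * sG r a b c.
Proof.
move=> hr; have [hq1 hq2] := q_bounds hr; case: hr => H1 H2.
rewrite /sG; set q := r^+2 - r - 1 in hq1 hq2 *; clearbody q.
set S0 := b - r*a; set S1 := c - r*b.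
rewrite -subr_ge0.
have -> : 2 * (S1 ^+ 2 + (r - 1) * S0 * S1 + q * S0 ^+ 2) - S1^+2 =
   (S1 + (r-1)*S0)^+2 + (2*q - (r-1)^+2) * S0^+2 :> R by ring.
apply: addr_ge0; first exact: sqr_ge0.
apply: mulr_ge0; last exact: sqr_ge0.
nra.
Qed.

Lemma G_S0 (R : rcfType) (r a b c : R) : rho_ok r -> (b - r*a)^+2 <= 4 * sG r a b c.
Proof.
move=> hr; have [hq1 hq2] := q_bounds hr; case: hr => H1 H2.
rewrite /sG; set q := r^+2 - r - 1 in hq1 hq2 *; clearbody q.
set S0 := b - r*a; set S1 := c - r*b.
rewrite -subr_ge0.
have -> : 4 * (S1 ^+ 2 + (r - 1) * S0 * S1 + q * S0 ^+ 2) - S0^+2 =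
   (2*S1 + (r-1)*S0)^+2 + (4*q - 1 - (r-1)^+2) * S0^+2 :> R by ring.
apply: addr_ge0; first exact: sqr_ge0.
apply: mulr_ge0; last exact: sqr_ge0.
nra.
Qed.

Lemma pos_from_G (R : rcfType) (r a b c : R) : rho_ok r -> 0 < sU r a b c ->
  20 * sG r a b c < (sU r a b c)^+2 -> 0 < a.
Proof.
move=> hr hu hg; have [hq1 hq2] := q_bounds hr; case: hr => H1 H2.
move: hu hg; rewrite /sG /sU; set q := r^+2 - r - 1 in hq1 hq2 *; clearbody q.
move=> hu hg.
set S0 := b - r*a; set S1 := c - r*b.
have hD : (2*r^+2 - r + q) * a = (c + (r - 1) * b + q * a) - (S1 + (2*r-1)*S0) by rewrite /S0 /S1; ring.
set U := c + (r - 1) * b + q * a in hu hg hD.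
have hsq : (S1 + (2*r-1)*S0)^+2 <= 20 * (S1 ^+ 2 + (r - 1) * S0 * S1 + q * S0 ^+ 2).
  rewrite -subr_ge0.
  set B := 20*(r-1) - 2*(2*r-1).
  set Ga := 20*q - (2*r-1)^+2.
  have -> : 20 * (S1 ^+ 2 + (r - 1) * S0 * S1 + q * S0 ^+ 2) - (S1 + (2*r-1)*S0)^+2
     = 19 * (S1 + B/38 * S0)^+2 + (Ga - B^+2/76) * S0^+2 by rewrite /B /Ga; field.
  apply: addr_ge0; first by apply: mulr_ge0 => //; exact: sqr_ge0.
  apply: mulr_ge0; last exact: sqr_ge0.
  rewrite /B /Ga.
  have e1 : 0 <= (r - 103/56) * (r + 103/56) by apply: mulr_ge0; lra.
  have e2 : 0 <= (184/100 - r) * (r + 184/100) by apply: mulr_ge0; lra.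
  nra.
have hlt2 : (S1 + (2*r-1)*S0)^+2 < U^+2 := le_lt_trans hsq hg.
have hlt : S1 + (2*r-1)*S0 < U.
  case: (lerP U (S1 + (2*r-1)*S0)) => // hle.
  have : U^+2 <= (S1 + (2*r-1)*S0)^+2.
    by rewrite ler_sqr // ?nnegrE; lra.
  lra.
have hDp : 0 < 2*r^+2 - r + q by nra.
have : 0 < (2*r^+2 - r + q) * a by rewrite hD; lra.
by rewrite pmulr_rgt0.
Qed.

Lemma sU_shift (R : rcfType) (r a b c : R) : r^+3 = r^+2 + r + 1 -> sU r b c (a+b+c) = r * sU r a b c.
Proof.
move=> h. apply/eqP; rewrite -subr_eq0; apply/eqP.
have -> : sU r b c (a+b+c) - r * sU r a b c = - a * (r^+3 - r^+2 - r - 1) by rewrite /sU; ring.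
by rewrite h; ring.
Qed.

Lemma sG_shift (R : rcfType) (r a b c : R) : r^+3 = r^+2 + r + 1 -> r * sG r b c (a+b+c) = sG r a b c.
Proof.
move=> h. apply/eqP; rewrite -subr_eq0; apply/eqP.
have -> : r * sG r b c (a+b+c) - sG r a b c = (r^+3 - r^+2 - r - 1) *
  (c^+2 - b*c - b^+2 - r*b*c - r*a^+2 + r^+2*b^+2) by rewrite /sG; ring.
by rewrite h; ring.
Qed.

Definition tr (R : rcfType) (s : seq int) (i : nat) : R := (nth 0 s i)%:~R.

Lemma trib_step (s : seq int) m : is_tribonacci s -> (m.+3 < size s)%N ->
  nth 0 s m.+3 = nth 0 s m + nth 0 s m.+1 + nth 0 s m.+2.
Proof.
move=> ht hm; rewrite (ht m.+3) //.
have -> : (m.+3 - 1 = m.+2)%N by lia.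
have -> : (m.+3 - 2 = m.+1)%N by lia.
have -> : (m.+3 - 3 = m)%N by lia.
ring.
Qed.

Lemma fwd_chain (R : rcfType) (r : R) (s : seq int) : r^+3 = r^+2 + r + 1 -> is_tribonacci s ->
  forall m, (m.+2 < size s)%N ->
  sU r (tr R s m) (tr R s m.+1) (tr R s m.+2) = r^+m * sU r (tr R s 0) (tr R s 1) (tr R s 2) /\
  sG r (tr R s 0) (tr R s 1) (tr R s 2) = r^+m * sG r (tr R s m) (tr R s m.+1) (tr R s m.+2).
Proof.
move=> h3 ht; elim=> [|m IH] hm; first by rewrite !expr0 !mul1r.
have [IH1 IH2] := IH (ltnW hm).
have e : tr R s m.+3 = tr R s m + tr R s m.+1 + tr R s m.+2.
  by rewrite /tr (trib_step ht hm) !rmorphD.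
rewrite e sU_shift // IH1 exprS mulrA; split => //.
by rewrite IH2 -(sG_shift (tr R s m) (tr R s m.+1) (tr R s m.+2) h3) mulrA [r^+m * r]mulrC.
Qed.

Lemma allpos (s : seq int) : is_tribonacci s -> trib_positive s ->
  forall i, (i < size s)%N -> 0 < nth 0 s i.
Proof.
move=> ht hp; elim/ltn_ind => i IH hi.
case: (ltnP i 3) => hi3; first by apply: hp; lia.
have [j ej] : exists j, i = j.+3 by exists (i - 3)%N; lia.
subst i; rewrite trib_step //.
by rewrite !addr_gt0 // IH //; lia.
Qed.

Definition bstep (t : int * int * int) : int * int * int :=
  let: (a, b, c) := t in (c - a - b, a, b).
Definition bt (x y z : int) j := iter j bstep (x, y, z).
Definition gg x y z j := (bt x y z j).2.
Definition gseq x y z L := mkseq (fun i => gg x y z (L.-1 - i)) L.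

Lemma gg_rec x y z j : gg x y z j = gg x y z j.+1 + gg x y z j.+2 + gg x y z j.+3.
Proof.
rewrite /gg /bt !iterS.
case: (iter j bstep (x, y, z)) => [[a b] c] /=.
ring.
Qed.

Lemma gg_12 x y z j : gg x y z j.+1 = (bt x y z j).1.2 /\ gg x y z j.+2 = (bt x y z j).1.1.
Proof.
rewrite /gg /bt !iterS.
by case: (iter j bstep (x, y, z)) => [[a b] c] /=.
Qed.

Definition WU (R : rcfType) (r : R) (t : int * int * int) := sU r (t.1.1)%:~R (t.1.2)%:~R (t.2)%:~R.
Definition WG (R : rcfType) (r : R) (t : int * int * int) := sG r (t.1.1)%:~R (t.1.2)%:~R (t.2)%:~R.

Lemma bwd_chain (R : rcfType) (r : R) x y z : r^+3 = r^+2 + r + 1 ->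
  forall j, WU r (bt x y z 0) = r^+j * WU r (bt x y z j) /\ WG r (bt x y z j) = r^+j * WG r (bt x y z 0).
Proof.
move=> h3; elim=> [|j [IH1 IH2]]; first by rewrite !expr0 !mul1r.
have [e1 e2] : WU r (bt x y z j) = r * WU r (bt x y z j.+1) /\ WG r (bt x y z j.+1) = r * WG r (bt x y z j).
  rewrite /bt iterS -/(bt x y z j).
  case: (bt x y z j) => [[a b] c] /=; rewrite /WU /WG /=.
  have ec : (c%:~R : R) = (c - a - b)%:~R + a%:~R + b%:~R by rewrite !rmorphB /=; ring.
  by rewrite {1}ec sU_shift // {1}ec sG_shift.
by rewrite IH1 e1 e2 IH2 exprSr; split; ring.
Qed.

Lemma sG_ge0 (R : rcfType) (r a b c : R) : rho_ok r -> 0 <= sG r a b c.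
Proof. move=> hr; have := G_S0 a b c hr; have := sqr_ge0 (b - r*a); lra. Qed.

Lemma bt_pos (R : rcfType) (r : R) x y z L : rho_ok r -> r^+3 = r^+2 + r + 1 ->
  0 < sU r x%:~R y%:~R z%:~R ->
  20 * r^+(3*L) * sG r x%:~R y%:~R z%:~R < (sU r x%:~R y%:~R z%:~R)^+2 ->
  forall j, (j <= L)%N -> 0 < (bt x y z j).1.1.
Proof.
move=> hr h3 hU hG j hj.
have r1 : 1 < r by case: hr => ? ?; lra.
have r0 : 0 < r by lra.
have [c1 c2] := bwd_chain x y z h3 j.
have e0 : WU r (bt x y z 0) = sU r x%:~R y%:~R z%:~R by [].
have g0 : WG r (bt x y z 0) = sG r x%:~R y%:~R z%:~R by [].
rewrite e0 in c1; rewrite g0 in c2.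
have rj : 0 < r^+j by apply: exprn_gt0.
have hUj : 0 < WU r (bt x y z j) by move: hU; rewrite c1 pmulr_rgt0.
have hG0 := sG_ge0 x%:~R y%:~R z%:~R hr.
have hmono : r^+(3*j) <= r^+(3*L) by rewrite ler_eXn2l //; lia.
have h2 : (r^+j)^+2 * (20 * WG r (bt x y z j)) < (r^+j)^+2 * (WU r (bt x y z j))^+2.
  rewrite -exprMn -c1 c2.
  have -> : (r^+j)^+2 * (20 * (r^+j * sG r x%:~R y%:~R z%:~R)) = 20 * r^+(3*j) * sG r x%:~R y%:~R z%:~R.
    by rewrite mulnC exprM; ring.
  apply: le_lt_trans hG.
  apply: ler_wpM2r => //; apply: ler_wpM2l => //.
rewrite ltr_pM2l in h2; last by apply: exprn_gt0.
have := pos_from_G hr hUj h2.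
by rewrite ltr0z.
Qed.

Lemma exist_seq (R : rcfType) (r : R) x y z L : rho_ok r -> r^+3 = r^+2 + r + 1 -> (5 <= L)%N ->
  0 < sU r x%:~R y%:~R z%:~R ->
  20 * r^+(3*(L-3)) * sG r x%:~R y%:~R z%:~R < (sU r x%:~R y%:~R z%:~R)^+2 ->
  pos_trib_seq z L (gseq x y z L).
Proof.
move=> hr h3 hL hU hG.
have hpos := bt_pos hr h3 hU hG.
split; first by rewrite size_mkseq.
split.
  move=> i hi3; rewrite size_mkseq => hiL.
  rewrite !nth_mkseq; try lia.
  have -> : (L.-1 - (i - 1) = (L.-1 - i).+1)%N by lia.
  have -> : (L.-1 - (i - 2) = (L.-1 - i).+2)%N by lia.
  have -> : (L.-1 - (i - 3) = (L.-1 - i).+3)%N by lia.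
  exact: gg_rec.
split.
  move=> i; rewrite size_mkseq => hi.
  rewrite nth_mkseq; last by lia.
  have -> : (L.-1 - i = (L - 3 - i).+2)%N by lia.
  have [_ ->] := gg_12 x y z (L - 3 - i).
  apply: hpos; lia.
split; first by rewrite size_mkseq; lia.
rewrite -nth_last size_mkseq nth_mkseq; last by lia.
by rewrite subnn.
Qed.

Lemma max_bound (R : rcfType) (r : R) n k s : rho_ok r -> r^+3 = r^+2 + r + 1 -> (4 <= k)%N ->
  pos_trib_seq n k s ->
  r^+(3*(k-3)) * sG r (tr R s (k-3)) (tr R s (k-2)) n%:~R <= 20 * r^+2 * (n%:~R)^+2.
Proof.
move=> hr h3 hk [hs [ht [hp [_ hl]]]].
have hap := allpos ht hp.
have hn : nth 0 s (k-1) = n by rewrite -hl -nth_last hs; congr nth; lia.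
have hsum : nth 0 s (k-1) = nth 0 s (k-2) + nth 0 s (k-3) + nth 0 s (k-4).
  rewrite (ht (k-1)%N); try lia.
  have -> : (k - 1 - 1 = k - 2)%N by lia.
  have -> : (k - 1 - 2 = k - 3)%N by lia.
  by have -> : (k - 1 - 3 = k - 4)%N by lia.
have px : 0 < nth 0 s (k-3) by apply: hap; lia.
have py : 0 < nth 0 s (k-2) by apply: hap; lia.
have pw : 0 < nth 0 s (k-4) by apply: hap; lia.
have [c1 c2] := fwd_chain h3 ht (m := (k-3)%N) (ltac:(lia)).
have e1 : ((k - 3).+1 = k - 2)%N by lia.
have e2 : ((k - 3).+2 = k - 1)%N by lia.
rewrite e2 e1 /tr hn -/(tr R s (k-3)) -/(tr R s (k-2)) in c1 c2.
have hG0 : sG r (tr R s 0) (tr R s 1) (tr R s 2) <= 20 * (sU r (tr R s 0) (tr R s 1) (tr R s 2))^+2.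
  apply: G_le_U => //; rewrite /tr ltr0z; apply: hap; lia.
set Ge := sG r (tr R s (k-3)) (tr R s (k-2)) n%:~R in c2 *.
set Ue := sU r (tr R s (k-3)) (tr R s (k-2)) n%:~R in c1.
set U0 := sU r (tr R s 0) (tr R s 1) (tr R s 2) in c1 hG0.
set G0 := sG r (tr R s 0) (tr R s 1) (tr R s 2) in c2 hG0.
have hUe : 0 < Ue /\ Ue <= r * n%:~R.
  have [hq1 hq2] := q_bounds hr; case: hr => H1 H2.
  have rx : (0 : R) < tr R s (k-3) by rewrite /tr ltr0z.
  have ry : (0 : R) < tr R s (k-2) by rewrite /tr ltr0z.
  have rw : (0 : R) < (nth 0 s (k-4))%:~R by rewrite ltr0z.
  have rs : (n%:~R : R) = tr R s (k-2) + tr R s (k-3) + (nth 0 s (k-4))%:~R.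
    by rewrite -hn hsum !rmorphD.
  rewrite /Ue /sU; set q := r^+2 - r - 1 in hq1 hq2 *; clearbody q.
  set X := tr R s (k-3) in rx rs *; set Y := tr R s (k-2) in ry rs *.
  set Wv := (nth 0 s (k-4))%:~R in rw rs.
  rewrite rs.
  have f1 : 0 <= (r - 1) * Y by apply: mulr_ge0; lra.
  have f2 : 0 <= q * X by apply: mulr_ge0; lra.
  have f3 : 0 <= (r - 1 - q) * X by apply: mulr_ge0; lra.
  have f4 : 0 <= (r - 1) * Wv by apply: mulr_ge0; lra.
  split; nra.
case: hUe => hUe1 hUe2.
have hUe3 : Ue^+2 <= (r * n%:~R)^+2 by rewrite ler_sqr ?nnegrE; lra.
have -> : r^+(3*(k-3)) * Ge = (r^+(k-3))^+2 * G0 by rewrite c2 mulnC exprM; ring.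
apply: le_trans (_ : (r^+(k-3))^+2 * (20 * U0^+2) <= _).
  apply: ler_wpM2l => //; exact: sqr_ge0.
have -> : (r^+(k-3))^+2 * (20 * U0^+2) = 20 * Ue^+2 by rewrite c1; ring.
have -> : 20 * r^+2 * (n%:~R)^+2 = 20 * (r * n%:~R)^+2 by ring.
by apply: ler_wpM2l.
Qed.

Lemma trib_inj n k s s' : (3 <= k)%N -> pos_trib_seq n k s -> pos_trib_seq n k s' ->
  nth 0 s (k-2) = nth 0 s' (k-2) -> nth 0 s (k-3) = nth 0 s' (k-3) -> s = s'.
Proof.
move=> hk [hs [ht [_ [_ hl]]]] [hs' [ht' [_ [_ hl']]]] e2 e3.
have e1 : nth 0 s (k-1) = nth 0 s' (k-1).
  rewrite -(nth_last 0 s) hs in hl; rewrite -(nth_last 0 s') hs' in hl'.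
  have -> : (k - 1 = k.-1)%N by lia.
  by rewrite hl hl'.
apply: (@eq_from_nth _ 0); first by rewrite hs hs'.
rewrite hs => i hi.
elim/ltn_ind: (k - 1 - i)%N {-2}i (erefl (k - 1 - i)%N) hi => d IH j hd hj.
case: (ltnP d 3) => hd3.
  have : (j = k - 1 \/ j = k - 2 \/ j = k - 3)%N by lia.
  by case=> [->|[->|->]].
have hj3 : (j.+3 < k)%N by lia.
have E := trib_step ht (m := j) (ltac:(lia)).
have E' := trib_step ht' (m := j) (ltac:(lia)).
have ej : nth 0 s j = nth 0 s j.+3 - nth 0 s j.+1 - nth 0 s j.+2 by rewrite E; ring.
have ej' : nth 0 s' j = nth 0 s' j.+3 - nth 0 s' j.+1 - nth 0 s' j.+2 by rewrite E'; ring.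
have IH' : forall j', (j < j')%N -> (j' < k)%N -> nth 0 s j' = nth 0 s' j'.
  move=> j' h1 h2; apply: (IH (k - 1 - j')%N) => //; lia.
by rewrite ej ej' !IH' //; lia.
Qed.

Lemma min_ex (T : eqType) (L : seq T) (f : T -> int) : L != [::] ->
  exists2 a, a \in L & forall b, b \in L -> f a <= f b.
Proof.
elim: L => [//|c L IH] _.
case: (altP (L =P [::])) => [->|hL].
  by exists c; rewrite ?mem_head // => b; rewrite inE => /eqP ->.
have [a ha hmin] := IH hL.
case: (lerP (f c) (f a)) => h.
  exists c; first exact: mem_head.
  move=> b; rewrite inE => /orP[/eqP -> //|hb].
  exact: le_trans h (hmin b hb).
exists a; first by rewrite inE ha orbT.
move=> b; rewrite inE => /orP[/eqP -> |hb]; [exact: ltW | exact: hmin].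
Qed.

Lemma enc_inj (W d1 d2 e1 e2 : nat) : (d2 < W)%N -> (e2 < W)%N ->
  (d1 * W + d2 = e1 * W + e2)%N -> d1 = e1 /\ d2 = e2.
Proof.
move=> h1 h2 e.
have W0 : (0 < W)%N by lia.
have := congr1 (fun x => divn x W) e; rewrite /= !divnMDl // !divn_small // !addn0 => ->.
have := congr1 (fun x => modn x W) e; rewrite /= !modnMDl !modn_small //.
Qed.

Lemma count_box (T : eqType) (L : seq T) (f g : T -> int) (W1 W2 : nat) :
  uniq L ->
  {in L &, forall a b, f a = f b -> g a = g b -> a = b} ->
  {in L &, forall a b, f a - f b <= W1%:Z} ->
  {in L &, forall a b, g a - g b <= W2%:Z} ->
  (size L <= W1.+1 * W2.+1)%N.
Proof.
move=> hu hinj hf hg.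
case: (altP (L =P [::])) => [-> //|hL].
have [a1 ha1 m1] := min_ex f hL.
have [a2 ha2 m2] := min_ex g hL.
pose e b := (`|f b - f a1|%N * W2.+1 + `|g b - g a2|%N)%N.
have hd1 : forall b, b \in L -> (`|f b - f a1|%N : int) = f b - f a1.
  move=> b hb; rewrite abszE ger0_norm // subr_ge0; exact: m1.
have hd2 : forall b, b \in L -> (`|g b - g a2|%N : int) = g b - g a2.
  move=> b hb; rewrite abszE ger0_norm // subr_ge0; exact: m2.
have hb1 : forall b, b \in L -> (`|f b - f a1| <= W1)%N.
  move=> b hb; have := hf b a1 hb ha1; rewrite -hd1 // lez_nat //.
have hb2 : forall b, b \in L -> (`|g b - g a2| <= W2)%N.
  move=> b hb; have := hg b a2 hb ha2; rewrite -hd2 // lez_nat //.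
have einj : {in L &, injective e}.
  move=> a b ha hb /enc_inj [].
  - by have := hb2 a ha; lia.
  - by have := hb2 b hb; lia.
  move=> E1 E2; apply: hinj => //.
  - by have := congr1 (fun x : nat => x%:Z) E1; rewrite /= !hd1 // => /eqP; rewrite subr_eq addrNK => /eqP.
  - by have := congr1 (fun x : nat => x%:Z) E2; rewrite /= !hd2 // => /eqP; rewrite subr_eq addrNK => /eqP.
rewrite -(size_map e).
have -> : (W1.+1 * W2.+1 = size (iota 0 (W1.+1 * W2.+1)))%N by rewrite size_iota.
apply: uniq_leq_size; first by rewrite map_inj_in_uniq.
move=> x /mapP [b hb ->]; rewrite mem_iota add0n /e.
have := hb1 b hb; have := hb2 b hb.
set u := `|f b - f a1|%N; set v := `|g b - g a2|%N => hv hu'.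
rewrite /=. nia.
Qed.

Lemma rho_exists (R : rcfType) : exists r : R, rho_ok r /\ r^+3 = r^+2 + r + 1.
Proof.
have := @poly_ivt R ('X^3 - 'X^2 - 'X - 1%:P) (103/56) (252/137).
rewrite !hornerE.
case.
- lra.
- apply/andP; split; lra.
move=> x /andP[hx1 hx2]; rewrite /root !hornerE => /eqP hx.
exists x; split; first by split.
apply/eqP; rewrite -subr_eq0; apply/eqP; rewrite -hx; ring.
Qed.

Lemma floor_ex (R : rcfType) (r : R) (m : nat) : 1 < r ->
  exists y : nat, r * y%:R <= m%:R /\ m%:R < r * (y.+1)%:R.
Proof.
move=> r1.
have exP : exists y : nat, r * y%:R <= m%:R by exists 0%N; rewrite mulr0 ler0n.
have ubP : forall y : nat, r * y%:R <= m%:R -> (y <= m)%N.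
  move=> y hy; rewrite -(ler_nat R); apply: le_trans hy.
  have hy0 : (0:R) <= y%:R := ler0n R y.
  nra.
case: (ex_maxnP exP ubP) => i hi hmax.
exists i; split => //.
rewrite ltNge; apply/negP => h.
by have := hmax _ h; rewrite ltnn.
Qed.

Lemma small_seq (n : int) : 3 <= n -> pos_trib_seq n 4 [:: 1; 1; n - 2; n].
Proof.
move=> hn; split => //; split.
  move=> i hi3 hi4; rewrite /= in hi4; have -> : i = 3%N by lia.
  rewrite /=; ring.
split.
  move=> i hi; rewrite /= in hi.
  have : (i = 0 \/ i = 1 \/ i = 2)%N by lia.
  by case=> [->|[->|->]] //=; lia.
by split.
Qed.

Lemma G0_bound (R : rcfType) (r a b c : R) : rho_ok r -> 0 <= b - r * a -> b - r * a <= r ->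
  0 <= c - r * b -> c - r * b <= r -> sG r a b c <= 9.
Proof.
move=> hr h1 h2 h3 h4.
have [hq1 hq2] := q_bounds hr; case: hr => H1 H2.
rewrite /sG; set q := r^+2 - r - 1 in hq1 hq2 *; clearbody q.
set S0 := b - r * a in h1 h2 *; set S1 := c - r * b in h3 h4 *.
have e1 : S1^+2 <= (184/100)^+2 by rewrite ler_sqr ?nnegrE; lra.
have e2 : S0^+2 <= (184/100)^+2 by rewrite ler_sqr ?nnegrE; lra.
have e3 : S0 * S1 <= (184/100)^+2 by rewrite expr2; apply: ler_pM => //; lra.
have e4 : (r - 1) * (S0 * S1) <= 84/100 * (184/100)^+2.
  apply: ler_pM; [lra | by apply: mulr_ge0 | lra | exact: e3].
have e5 : q * S0^+2 <= 545/1000 * (184/100)^+2.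
  apply: ler_pM; [lra | exact: sqr_ge0 | lra | exact: e2].
have -> : S1 ^+ 2 + (r - 1) * S0 * S1 + q * S0 ^+ 2 = S1 ^+ 2 + (r - 1) * (S0 * S1) + q * S0 ^+ 2 by ring.
lra.
Qed.

Lemma sq_abs (R : rcfType) (S c : R) : 0 <= c -> S^+2 <= c^+2 -> -c <= S /\ S <= c.
Proof.
move=> hc h.
split; apply/negP => /negP; rewrite -ltNge => hlt; move: h; apply/negP; rewrite -ltNge; nra.
Qed.

Lemma ydiff (R : rcfType) (r d : R) : rho_ok r -> r * d <= 780 -> d < 425.
Proof.
move=> [H1 H2] h; rewrite ltNge; apply/negP => hd.
have : 0 <= (r - 103/56) * (d - 425) by apply: mulr_ge0; lra.
nra.
Qed.

Lemma xdiff (R : rcfType) (r d e : R) : rho_ok r -> r * d <= 780 -> r * e <= d + 1104 -> e < 832.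
Proof.
move=> [H1 H2] h1 h2; rewrite ltNge; apply/negP => he.
have f1 : 0 <= r * (e - 832) by apply: mulr_ge0; lra.
have f2 : 0 <= (r - 103/56) * (r + 103/56) by apply: mulr_ge0; lra.
have f3 : r * (r * e) <= r * (d + 1104) by apply: ler_wpM2l => //; lra.
nra.
Qed.

Lemma r5_bound (R : rcfType) (r : R) : rho_ok r -> r^+5 <= 2106/100.
Proof.
move=> [H1 H2].
apply: le_trans (_ : (252/137)^+5 <= _); last by lra.
rewrite ler_pXn2r // nnegrE; lra.
Qed.

Theorem theorem1 (n : int) (k : nat) :
  3 <= n -> is_t n k ->
  forall L : seq (seq int), uniq L ->
    (forall s, s \in L -> pos_trib_seq n k s) ->
    (size L <= 561001)%N.
Proof.
move=> hn [hk0 [[s0 hs0] hmax]] L hu hL.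
have hk4 : (4 <= k)%N := hmax 4%N _ isT (small_seq hn).
have [r [hr h3]] := rho_exists realalg.
have [m em] : exists m : nat, n = m%:Z.
  exists `|n|%N; rewrite abszE ger0_norm //; lia.
subst n.
have [H1 H2] := hr.
have [hq1 hq2] := q_bounds hr.
have r1 : 1 < r by lra.
have r0 : 0 < r by lra.
have [y0 [hy1 hy2]] := floor_ex m r1.
have [x0 [hx1 hx2]] := floor_ex y0 r1.
have hm3 : (3 <= m)%N by move: hn; rewrite (lez_nat 3 m).
have hmR : (3 : realalg) <= m%:R by rewrite (ler_nat realalg 3 m).
have hx0 : (0 : realalg) <= x0%:R := ler0n _ _.
have hy0 : (0 : realalg) <= y0%:R := ler0n _ _.
have hG0 : sG r (x0%:Z)%:~R (y0%:Z)%:~R (m%:Z)%:~R <= 9.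
  apply: (G0_bound hr) => /=; rewrite /intmul /=; try lra.
have hU0 : (m%:R : realalg) <= sU r (x0%:Z)%:~R (y0%:Z)%:~R (m%:Z)%:~R.
  rewrite /sU /intmul /=.
  set q := r^+2 - r - 1 in hq1 hq2 *.
  have f1 : 0 <= (r - 1) * y0%:R by apply: mulr_ge0; lra.
  have f2 : 0 <= q * x0%:R by apply: mulr_ge0; lra.
  lra.
set U0 := sU r _ _ _ in hU0.
set G0 := sG r _ _ _ in hG0.
have hno : U0^+2 <= 20 * r^+(3*(k.+1-3)) * G0.
  rewrite leNgt; apply/negP => h.
  have hU0p : 0 < U0 by lra.
  have := hmax k.+1 _ isT (exist_seq hr h3 (hk4 : (5 <= k.+1)%N) hU0p h).
  by rewrite ltnn.
set P := r^+(3*(k-3)).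
have hP : 0 < P by apply: exprn_gt0.
have eP : r^+(3*(k.+1-3)) = P * r^+3.
  by rewrite /P -exprD; congr (_ ^+ _); clear -hk4; lia.
rewrite eP in hno.
have hG0p : 0 <= G0 := sG_ge0 _ _ _ hr.
have hmsq : (m%:R : realalg)^+2 <= 180 * (P * r^+3).
  apply: le_trans (_ : U0^+2 <= _).
    by rewrite ler_sqr ?nnegrE; lra.
  apply: le_trans hno _.
  have : 0 <= P * r^+3 by apply: mulr_ge0; [lra | apply: exprn_ge0; lra].
  nra.
have hr5 := r5_bound hr.
have hGs : forall s, s \in L -> sG r (tr realalg s (k-3)) (tr realalg s (k-2)) (m%:Z)%:~R <= 76 * 1000.
  move=> s hs.
  have hb := max_bound hr h3 hk4 (hL s hs).
  set Gs := sG r _ _ _ in hb *.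
  have hGs0 : 0 <= Gs := sG_ge0 _ _ _ hr.
  have : P * Gs <= P * (3600 * r^+5).
    apply: le_trans hb _.
    have -> : P * (3600 * r^+5) = 20 * r^+2 * (180 * (P * r^+3)) by ring.
    apply: ler_wpM2l; first by apply: mulr_ge0; [lra | apply: sqr_ge0].
    exact: hmsq.
  rewrite ler_pM2l // => h.
  lra.
have key : forall s, s \in L ->
   (-390 <= (m%:Z)%:~R - r * tr realalg s (k-2) /\ (m%:Z)%:~R - r * tr realalg s (k-2) <= 390) /\
   (-552 <= tr realalg s (k-2) - r * tr realalg s (k-3) /\ tr realalg s (k-2) - r * tr realalg s (k-3) <= 552).
  move=> s hs; have hg := hGs s hs.
  split; apply: sq_abs => //.
  - apply: le_trans (G_S1 _ _ _ hr) _; lra.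
  - apply: le_trans (G_S0 _ _ _ hr) _; lra.
apply: (@leq_trans (424.+1 * 831.+1)); last by apply/idP; vm_compute; reflexivity.
apply: (count_box (f := fun s => nth 0 s (k-2)) (g := fun s => nth 0 s (k-3))) => //.
- move=> a b ha hb ea eb; apply: (trib_inj (n := m%:Z) (k := k)) => //; [clear -hk4; lia | exact: hL | exact: hL].
- move=> a b ha hb /=.
  have [[ka1 ka2] _] := key a ha; have [[kb1 kb2] _] := key b hb.
  have : ((nth 0 a (k-2) - nth 0 b (k-2))%:~R : realalg) < (425%:Z)%:~R.
    rewrite rmorphB /=; apply: (ydiff hr); rewrite /tr in ka1 ka2 kb1 kb2; lra.
  rewrite ltr_int => hd; rewrite -ltzD1; exact: hd.
- move=> a b ha hb /=.
  have [[ka1 ka2] [ka3 ka4]] := key a ha; have [[kb1 kb2] [kb3 kb4]] := key b hb.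
  have : ((nth 0 a (k-3) - nth 0 b (k-3))%:~R : realalg) < (832%:Z)%:~R.
    rewrite rmorphB /=; rewrite /tr in ka1 ka2 kb1 kb2 ka3 ka4 kb3 kb4.
    apply: (xdiff (d := (nth 0 a (k-2))%:~R - (nth 0 b (k-2))%:~R) hr); lra.
  rewrite ltr_int => hd; rewrite -ltzD1; exact: hd.
Qed.
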